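(* Let $r,d,\mu_C:[0,\infty)\to\mathbb{R}$ be Lipschitz continuous with $r(0)>d(0)>0$, $r'<0$, $r(+\infty)=0$, $d'>0$, and $\mu_C>0$, $\mu_C'<0$, $\mu_C(\infty)=0$. Take the constant dose $c\equiv 1$ and assume there is $x_c>0$ such that $$r(x)-d(x)-c\mu_C(x)<\overline{R_c}:=r(x_c)-d(x_c)-c\mu_C(x_c)\quad\text{for all } x\neq x_c,\qquad \overline{R_c}>0.$$ Let $n_C^0>0$ be an integrable initial datum on $[0,\infty)$ and $n_C$ the solution of $$\frac{\partial}{\partial t}n_C(x,t)=\big[r(x)-d(x)-c\,\mu_C(x)\big]n_C(x,t),\qquad n_C(x,0)=n_C^0(x)$$ (the cancer-cell model with no mutations, $\theta_C=0$). Set $\rho_C(t)=\int_0^\infty n_C(x,t)\,dx$. Then $\rho_C(t)\to\infty$ as $t\to\infty$ with an exponential rate, and $\dfrac{n_C(\cdot,t)}{\rho_C(t)}\to\delta(x-x_c)$ as $t\to\infty$, weakly in the sense of measures.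
   Context: $n_C(x,t)$ is the density of cancer cells with resistance-gene expression level $x\ge0$; $r$, $d$ are birth and death rates, $c$ the (constant) drug dose and $\mu_C(x)$ the drug-induced death rate of cancer cells with level $x$. $\delta(x-x_c)$ is the Dirac mass at $x_c$. *)

(* Defs.v *)
From HB Require Import structures.
From mathcomp Require Import all_boot all_order all_algebra.
From mathcomp Require Import all_classical all_reals all_analysis.
Set Implicit Arguments. Unset Strict Implicit. Unset Printing Implicit Defensive.
Import Order.TTheory GRing.Theory Num.Theory.
Import numFieldNormedType.Exports.
Local Open Scope classical_set_scope.
Local Open Scope ring_scope.

Definition total_mass (R : realType) (n : R -> R -> R) (t : R) : R :=
  Rintegral (@lebesgue_measure R) `[0, +oo[ (fun x => n x t).

(* Main.v *)
Require Import Defs.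
From HB Require Import structures.
From mathcomp Require Import all_boot all_order all_algebra.
From mathcomp Require Import all_classical all_reals all_analysis.
From mathcomp Require Import ring lra.
Import Order.TTheory GRing.Theory Num.Theory.
Import numFieldNormedType.Exports.
Local Open Scope classical_set_scope.
Local Open Scope ring_scope.

Lemma lip_ex (R : realType) (f : R -> R) (A : set R) :
  [lipschitz f x | x in A] ->
  exists2 k, 0 <= k & forall x y, A x -> A y -> `|f x - f y| <= k * `|x - y|.
Proof.
move=> [M [_ HM]].
have kM : M < `|M| + 1 by rewrite (le_lt_trans (ler_norm M)) // ltrDl.
exists (`|M| + 1); first by rewrite addr_ge0.
move=> x y Ax Ay; exact: (HM _ kM (x, y) (conj Ax Ay)).
Qed.

Lemma lip_within (R : realType) (f : R -> R) (A : set R) k :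
  (forall x y, A x -> A y -> `|f x - f y| <= k * `|x - y|) ->
  {within A, continuous f}.
Proof.
move=> H; apply/subspace_continuousP => x Ax.
apply/cvgrPdist_lt => e e0.
have k1 : 0 < `|k| + 1 by rewrite ltr_pwDr.
rewrite /within /=; apply/nbhs_ballP; exists (e / (`|k| + 1)).
  by apply: divr_gt0.
move=> y; rewrite /ball /= => xy Ay.
apply: (le_lt_trans (H x y Ax Ay)).
apply: (le_lt_trans (y := (`|k| + 1) * `|x - y|)).
  by rewrite ler_wpM2r // (le_trans (ler_norm k)) // lerDl.
by rewrite -ltr_pdivlMl // mulrC.
Qed.

Lemma Rint_gt0 (R : realType) (A : set R) (f : R -> R) :
  measurable A -> (0 < lebesgue_measure A)%E ->
  (@lebesgue_measure R).-integrable A (EFin \o f) -> (forall x, A x -> 0 < f x) ->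
  0 < Rintegral (@lebesgue_measure R) A f.
Proof.
move=> mA muA intf fpos.
have fin : (\int[@lebesgue_measure R]_(x in A) (f x)%:E)%E \is a fin_num.
  by apply: integrable_fin_num.
rewrite lt0r Rintegral_ge0 ?andbT; last by move=> x /fpos/ltW.
rewrite /Rintegral fine_eq0 //.
apply/negP => /eqP I0.
have /integrableP[mf _] := intf.
have : (\int[@lebesgue_measure R]_(x in A) `|(EFin \o f) x| = 0)%E.
  rewrite -I0; apply: eq_integral => x /[!inE] Ax /=.
  by rewrite ger0_norm // ltW // fpos.
move/(ae_eq_integral_abs (@lebesgue_measure R) mA mf) => [N [mN N0 sub]].
have AN : A `<=` N.
  move=> x Ax; apply: sub => /= /(_ Ax) [] /eqP.
  by rewrite (gt_eqF (fpos x Ax)).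
have h : (lebesgue_measure A <= lebesgue_measure N)%E.
  by apply: le_measure => //; rewrite inE.
move: h; rewrite N0 => h.
by move: muA; rewrite ltNge h.
Qed.

Lemma Rint_subset (R : realType) (A B : set R) (f : R -> R) :
  measurable A -> measurable B -> A `<=` B ->
  (@lebesgue_measure R).-integrable B (EFin \o f) -> (forall x, B x -> 0 <= f x) ->
  Rintegral (@lebesgue_measure R) A f <= Rintegral (@lebesgue_measure R) B f.
Proof.
move=> mA mB AB iB f0.
have iA : (@lebesgue_measure R).-integrable A (EFin \o f).
  by apply: integrableS iB.
apply: fine_le; [exact: integrable_fin_num|exact: integrable_fin_num|].
apply: ge0_subset_integral => //; first by case/integrableP: iB.

Qed.

Lemma int_dom (R : realType) (D : set R) (u v : R -> R) (B : R) :
  measurable D -> measurable_fun D u ->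
  (@lebesgue_measure R).-integrable D (EFin \o v) ->
  (forall x, D x -> `|u x| <= B * v x) ->
  (@lebesgue_measure R).-integrable D (EFin \o u).
Proof.
move=> mD mu iv H.
have iBv : (@lebesgue_measure R).-integrable D (EFin \o (fun x => B * v x)).
  have -> : EFin \o (fun x => B * v x) = (fun x => B%:E * (EFin \o v) x)%E.
    by apply/funext => x; rewrite /= EFinM.
  exact: integrableZl.
apply: le_integrable iBv => //.
  exact/measurable_realfun.measurable_EFinP.
move=> x Dx; rewrite /comp; change ((`|u x|)%:E <= (`|B * v x|)%:E)%E.
by rewrite lee_fin (le_trans (H x Dx)) // ler_norm.
Qed.
Lemma ode_sol (R : realType) (m : R -> R) (a n0x : R) :
  {within `[0, +oo[, continuous m} ->
  (forall t, 0 < t -> derivable m t 1 /\ derive1 m t = a * m t) ->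
  m 0 = n0x ->
  forall t, 0 <= t -> m t = n0x * expR (a * t).
Proof.
move=> mc md m0 t; rewrite le_eqVlt => /orP[/eqP<-|t0].
  by rewrite mulr0 expR0 mulr1.
pose e s := expR (- a * s).
have ec : continuous e.
  move=> s; apply: continuous_comp; last exact: continuous_expR.
  apply: continuousM; [exact: cvg_cst | exact: cvg_id].
have hd : forall s, s \in `]0, t[ -> is_derive s 1 (m * e) 0.
  move=> s; rewrite in_itv /= => /andP[s0 _].
  have [dm dmv] := md s s0.
  have Dm : is_derive s 1 m (a * m s).
    by rewrite -dmv derive1E; exact: derivableP.
  have Dl : is_derive s 1 (fun s => - a * s) (- a).
    have := is_deriveZ (f := id) (- a) (is_derive_id s 1).
    by rewrite /GRing.scale /= mulr1.
  have De : is_derive s 1 e (expR (- a * s) * (- a)).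
    exact: (is_derive1_comp (f := expR) (g := fun s => - a * s)).
  move: (is_deriveM Dm De) => H; apply: is_derive_eq H _.
  change (m s * (expR (- a * s) * - a) + e s * (a * m s) = 0).
  rewrite /e; lra.
have hc : {within `[0, t], continuous (m * e)}.
  have mc' : {within `[0, t], continuous m}.
    apply: continuous_subspaceW mc => x; rewrite /= !in_itv /= => /andP[-> _].
    by [].
  move=> x; apply: continuousM; first exact: mc'.
  by apply: continuous_subspaceT => y; exact: ec.
have [c _ ] := MVT_segment (ltW t0) hd hc.
rewrite mul0r /= => /eqP; rewrite subr_eq0 => /eqP.
change (m t * e t = m 0 * e 0 -> m t = n0x * expR (a * t)).
rewrite m0 /e mulr0 expR0 mulr1 => H.
have -> : m t = m t * expR (- a * t) * expR (a * t).
  by rewrite -mulrA -expRD mulNr addNr expR0 mulr1.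
by rewrite H.
Qed.

Lemma intZ (R : realType) (D : set R) (v : R -> R) (k : R) :
  measurable D -> (@lebesgue_measure R).-integrable D (EFin \o v) ->
  (@lebesgue_measure R).-integrable D (EFin \o (fun x => k * v x)).
Proof.
move=> mD iv.
have -> : EFin \o (fun x => k * v x) = (fun x => k%:E * (EFin \o v) x)%E.
  by apply/funext => x; rewrite /= EFinM.
exact: integrableZl.
Qed.

Lemma intD (R : realType) (D : set R) (u v : R -> R) :
  measurable D -> (@lebesgue_measure R).-integrable D (EFin \o u) ->
  (@lebesgue_measure R).-integrable D (EFin \o v) ->
  (@lebesgue_measure R).-integrable D (EFin \o (fun x => u x + v x)).
Proof.
move=> mD iu iv.
have -> : EFin \o (fun x => u x + v x) = ((EFin \o u) \+ (EFin \o v))%E.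
  by apply/funext => x; rewrite /= EFinD.
exact: integrableD.
Qed.
Arguments intZ {R D v} k.
Arguments intD {R D u v}.

Arguments lip_ex {R f A}.
Arguments lip_within {R f A k}.
Arguments Rint_gt0 {R A f}.
Arguments Rint_subset {R A B f}.
Arguments int_dom {R D u v B}.
Arguments ode_sol {R m a n0x}.

Theorem lemma2p3 (R : realType) (r d muC : R -> R) (c xc : R)
  (n0 : R -> R) (n : R -> R -> R)
  (* regularity and structural assumptions on the rates *)
  (r_lip : [lipschitz r x | x in `[0, +oo[])
  (d_lip : [lipschitz d x | x in `[0, +oo[])
  (mu_lip : [lipschitz muC x | x in `[0, +oo[])
  (hrd : r 0 > d 0) (hd0 : d 0 > 0)
  (r_der : forall x, 0 < x -> derivable r x 1 /\ derive1 r x < 0)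
  (r_inf : r x @[x --> +oo] --> 0)
  (d_der : forall x, 0 < x -> derivable d x 1 /\ derive1 d x > 0)
  (mu_pos : forall x, 0 <= x -> muC x > 0)
  (mu_der : forall x, 0 < x -> derivable muC x 1 /\ derive1 muC x < 0)
  (mu_inf : muC x @[x --> +oo] --> 0)
  (* constant dose c = 1 *)
  (hc : c = 1)
  (* unique strict maximizer xc of the net growth rate, with positive max *)
  (hxc : 0 < xc)
  (hmax : forall x, 0 <= x -> x != xc ->
     r x - d x - c * muC x < r xc - d xc - c * muC xc)
  (hRc : 0 < r xc - d xc - c * muC xc)
  (* initial datum: positive and integrable on [0, +oo[ *)
  (n0_pos : forall x, 0 <= x -> 0 < n0 x)
  (n0_int : (@lebesgue_measure R).-integrable `[0, +oo[ (fun x => (n0 x)%:E))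
  (* n solves  d/dt n(x,t) = (r - d - c muC)(x) n(x,t),  n(x,0) = n0(x) *)
  (n_cont : forall x, 0 <= x -> {within `[0, +oo[, continuous (n x)})
  (n_der : forall x t, 0 <= x -> 0 < t ->
     derivable (n x) t 1 /\ derive1 (n x) t = (r x - d x - c * muC x) * n x t)
  (n_init : forall x, 0 <= x -> n x 0 = n0 x) :
  (* rho_C(t) -> +oo at an exponential rate *)
  (total_mass n t @[t --> +oo] --> +oo /\
   exists lam C : R, 0 < lam /\ 0 < C /\
     forall t, 0 <= t -> C * expR (lam * t) <= total_mass n t) /\
  (* n(.,t)/rho(t) -> delta_{xc} weakly (narrowly) as measures on [0, +oo[ *)
  (forall phi : R -> R,
     {within `[0, +oo[, continuous phi} ->
     (exists M : R, forall x, 0 <= x -> `|phi x| <= M) ->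
     (Rintegral (@lebesgue_measure R) `[0, +oo[ (fun x => phi x * n x t))
       / total_mass n t @[t --> +oo] --> phi xc).
Proof.
subst c.
pose D : set R := `[0, +oo[%classic.
have inD : forall x, 0 <= x -> D x by move=> x x0; rewrite /D /= in_itv /= x0.
have Din : forall x, D x -> 0 <= x by move=> x; rewrite /D /= in_itv /= andbT.
pose g x := r x - d x - 1 * muC x.
pose G := g xc.
have [kr kr0 Hr] := lip_ex r_lip.
have [kd kd0 Hd] := lip_ex d_lip.
have [km km0 Hm] := lip_ex mu_lip.
pose K := kr + kd + km.
have K0 : 0 <= K by rewrite /K !addr_ge0.
have HK : forall x y, D x -> D y -> `|g x - g y| <= K * `|x - y|.
  move=> x y Dx Dy.
  have -> : g x - g y = (r x - r y) - (d x - d y) - (muC x - muC y).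
    by rewrite /g !mul1r; ring.
  apply: (le_trans (ler_normB _ _)).
  apply: (le_trans (lerD (ler_normB _ _) (lexx _))).
  rewrite /K !mulrDl; apply: lerD; [apply: lerD|].
  - exact: Hr.
  - exact: Hd.
  - exact: Hm.
have gc : {within D, continuous g} := lip_within HK.
have G0 : 0 < G by [].
have gmax : forall x, 0 <= x -> g x <= G.
  move=> x x0; have [->|xn] := eqVneq x xc; first exact: lexx.
  exact/ltW/hmax.
have sol : forall x t, 0 <= x -> 0 <= t -> n x t = n0 x * expR (g x * t).
  move=> x t x0 t0.
  exact: (ode_sol (a := g x) (n_cont x x0) (fun t t0 => n_der x t x0 t0) (n_init x x0) t t0).
have mD : measurable D by exact: measurable_itv.
have mn0 : measurable_fun D n0.
  by have /integrableP[h _] := n0_int; exact/measurable_realfun.measurable_EFinP.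
have mg : measurable_fun D g by exact: measurable_realfun.subspace_continuous_measurable_fun.
pose f t x := n0 x * expR (g x * t).
have mf : forall t, measurable_fun D (f t).
  move=> t; apply: measurable_realfun.measurable_funM => //.
  apply: measurableT_comp => //.
  by apply: measurable_realfun.measurable_funM => //; exact: measurable_cst.
have fpos : forall t x, 0 <= x -> 0 < f t x.
  by move=> t x x0; rewrite /f mulr_gt0 ?expR_gt0 ?n0_pos.
have fle : forall t x, 0 <= t -> 0 <= x -> f t x <= expR (G * t) * n0 x.
  move=> t x t0 x0; rewrite /f [X in _ <= X]mulrC.
  apply: ler_wpM2l; first exact/ltW/n0_pos.
  by rewrite ler_expR ler_wpM2r // gmax.
have intf : forall t, 0 <= t -> (@lebesgue_measure R).-integrable D (EFin \o f t).
  move=> t t0; apply: (int_dom mD (mf t) n0_int) => x Dx.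
  rewrite ger0_norm; last exact/ltW/fpos/Din.
  exact: fle (Din _ Dx).
have rhoE : forall t, 0 <= t -> total_mass n t = Rintegral (@lebesgue_measure R) D (f t).
  move=> t t0; apply: eq_Rintegral => x; rewrite inE => Dx.
  by rewrite sol // Din.
have intpos : forall a b, 0 <= a -> a < b -> 0 < Rintegral (@lebesgue_measure R) `[a, b] n0.
  move=> a b a0 ab.
  apply: Rint_gt0.
  - exact: measurable_itv.
  - by rewrite lebesgue_measure_itv /= lte_fin ab /= -EFinD lte_fin subr_gt0.
  - apply: (integrableS _ _ _ n0_int); first exact: mD; first apply: measurable_itv.
    by move=> x; rewrite /= !in_itv /= => /andP[ax _]; rewrite (le_trans a0 ax).
  - move=> x; rewrite /= in_itv /= => /andP[ax _]; apply: n0_pos.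
    exact: le_trans a0 ax.
have lowb : forall a b kap t, 0 <= a -> a < b -> (forall x, a <= x <= b -> kap <= g x) ->
    0 <= t -> expR (kap * t) * Rintegral (@lebesgue_measure R) `[a, b] n0 <= total_mass n t.
  move=> a b kap t a0 ab hk t0.
  have sub : `[a, b]%classic `<=` D.
    move=> x; rewrite /= !in_itv /= => /andP[ax _]; apply: inD.
    exact: le_trans a0 ax.
  have mI : measurable (`[a, b]%classic : set R) by exact: measurable_itv.
  have intI : (@lebesgue_measure R).-integrable `[a, b] (EFin \o n0).
    exact: (integrableS _ _ _ n0_int).
  have intfI : (@lebesgue_measure R).-integrable `[a, b] (EFin \o f t).
    exact: (integrableS _ _ _ (intf t t0)).
  have intZ : (@lebesgue_measure R).-integrable `[a, b]
      (EFin \o (fun x => expR (kap * t) * n0 x)).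
    have -> : EFin \o (fun x => expR (kap * t) * n0 x) =
        (fun x => (expR (kap * t))%:E * (EFin \o n0) x)%E.
      by apply/funext => x; rewrite /= EFinM.
    exact: integrableZl.
  rewrite rhoE // -RintegralZl //.
  apply: (le_trans (y := Rintegral (@lebesgue_measure R) `[a, b] (f t))).
    apply: le_Rintegral => // x; rewrite /= in_itv /= => /andP[ax xb].
    rewrite /f mulrC; apply: ler_wpM2l.
      by apply/ltW/n0_pos; exact: le_trans a0 ax.
    by rewrite ler_expR ler_wpM2r // hk // ax xb.
  apply: Rint_subset => //.
    exact: intf.
  by move=> x Dx; exact/ltW/fpos/Din.
have rho0 : forall t, 0 <= t -> 0 < total_mass n t.
  move=> t t0; rewrite rhoE //; apply: Rint_gt0 => //.
  - by rewrite /D lebesgue_measure_itv /= ltry oppr0 addye // ltry.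
  - exact: intf.
  - by move=> x Dx; apply/fpos/Din.
pose s1 := G / (2 * (K + 1)).
have K10 : 0 < K + 1 by rewrite ltr_pwDr.
have s10 : 0 < s1 by rewrite /s1 divr_gt0 // mulr_gt0.
have Ks1 : K * s1 <= G / 2.
  have -> : G / 2 = (K + 1) * s1 by rewrite /s1; field; rewrite gt_eqF.
  by apply: ler_wpM2r; [exact: ltW | rewrite lerDl].
have gnear1 : forall x, xc <= x <= xc + s1 -> G / 2 <= g x.
  move=> x /andP[h1 h2].
  have := HK xc x (inD _ (ltW hxc)) (inD _ (le_trans (ltW hxc) h1)).
  move/(le_trans (ler_norm _)) => h3.
  have h4 : `|xc - x| <= s1 by rewrite distrC ger0_norm ?subr_ge0 //; lra.
  have h5 : K * `|xc - x| <= K * s1 by rewrite ler_wpM2l.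
  move: Ks1; rewrite /G; lra.
have xcs1 : xc < xc + s1 by rewrite ltrDl.
have C10 := intpos _ _ (ltW hxc) xcs1.
have expb : forall t, 0 <= t -> Rintegral (@lebesgue_measure R) `[xc, xc + s1] n0 * expR (G / 2 * t)
    <= total_mass n t.
  by move=> t t0; rewrite mulrC; apply: lowb => //; exact: ltW.
split.
  split; last first.
    exists (G / 2), (Rintegral (@lebesgue_measure R) `[xc, xc + s1] n0).
    by split; [rewrite divr_gt0 | split].
  apply/cvgryPge => A.
  set C1 := Rintegral _ _ _ in C10 expb.
  near=> t.
  have t0 : `|A| / (C1 * (G / 2)) <= t by near: t; apply: nbhs_pinfty_ge; rewrite num_real.
  have CG : 0 < C1 * (G / 2) by rewrite mulr_gt0 // divr_gt0.
  have tpos : 0 <= t by apply: le_trans t0; rewrite divr_ge0 // ltW.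
  apply: (le_trans _ (expb t tpos)).
  have h1 : 1 + G / 2 * t <= expR (G / 2 * t) by exact: expR_ge1Dx.
  have h2 : `|A| <= C1 * (G / 2) * t by rewrite -ler_pdivrMl.
  have h3 : C1 * (1 + G / 2 * t) <= C1 * expR (G / 2 * t) by rewrite ler_wpM2l // ltW.
  have h4 : A <= `|A| by exact: ler_norm.
  have h5 : 0 <= C1 by exact: ltW.
  nra.
move=> phi phic [M HM].
have M0 : 0 <= M by apply: le_trans (HM 0 (lexx 0)).
have mphi : measurable_fun D phi.
  exact: measurable_realfun.subspace_continuous_measurable_fun.
have dmon : forall x, 0 <= x -> d 0 <= d x.
  move=> x x0; apply: (ger0_derive1_ndecry (a := 0)) => //.
  - by move=> y; rewrite in_itv /= andbT => y0; exact: (d_der y y0).1.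
  - by move=> y; rewrite in_itv /= andbT => y0; exact/ltW/(d_der y y0).2.
  - exact: (lip_within Hd).
have glt : forall x, 0 <= x -> g x < r x.
  move=> x x0; rewrite /g mul1r; have h1 := dmon x x0; have h2 := mu_pos x x0.
  clear -h1 h2 hd0; lra.
have [X0 [X0r HX0]] : \forall x \near +oo, r x < G / 2.
  move/cvgrPdist_lt: r_inf => /(_ (G / 2) (divr_gt0 G0 (ltr0Sn _ 1))).
  apply: filterS => x; rewrite sub0r normrN => h.
  exact: le_lt_trans (ler_norm _) h.
have [phii _] := (continuous_within_itvcyP 0 phi).1 phic.
have phixc : {for xc, continuous phi}.
  by apply: phii; rewrite in_itv /= hxc.
apply/cvgrPdist_lt => e e0.
have e20 : 0 < e / 2 by rewrite divr_gt0.
move/cvgrPdist_lt: phixc => /(_ (e / 2) e20).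
move/nbhs_ballP => [δ1 δ10 Hδ1].
pose δ := Num.min δ1 (xc / 2).
have δ0 : 0 < δ by rewrite /δ lt_min δ10 divr_gt0.
have δδ1 : δ <= δ1 by rewrite /δ ge_min lexx.
have δxc : δ <= xc / 2 by rewrite /δ ge_min lexx orbT.
pose X := `|X0| + xc + δ + 1.
have X0X : X0 < X.
  have h1 := ler_norm X0; rewrite /X; clear -h1 hxc δ0; lra.
have EVTg : forall a b, 0 <= a -> a <= b ->
    exists2 c, a <= c <= b & forall x, a <= x <= b -> g x <= g c.
  move=> a b a0 ab.
  have gcab : {within `[a, b], continuous g}.
    apply: continuous_subspaceW gc => x; rewrite /= !in_itv /= => /andP[ax _].
    by apply: inD; exact: le_trans a0 ax.
  have [c cin cmax] := EVT_max ab gcab.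
  exists c; first by move: cin; rewrite in_itv.
  by move=> x xab; apply: cmax; rewrite in_itv.
have xd0 : 0 <= xc - δ by clear -δxc hxc; lra.
have xd1 : 0 <= xc + δ by clear -δ0 hxc; lra.
have xd2 : xc + δ <= X by rewrite /X; have h1 := normr_ge0 X0; clear -h1; lra.
have [c1 /andP[c10 c1b] c1max] := EVTg 0 (xc - δ) (lexx 0) xd0.
have [c2 /andP[c2a c2b] c2max] := EVTg (xc + δ) X xd1 xd2.
have gc1 : g c1 < G.
  by apply: hmax => //; rewrite lt_eqF //; clear -c1b δ0; lra.
have gc2 : g c2 < G.
  by apply: hmax; [clear -c2a δ0 hxc; lra | rewrite gt_eqF //; clear -c2a δ0; lra].
pose η := Num.min (G - g c1) (Num.min (G - g c2) (G / 2)).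
have η0 : 0 < η by rewrite /η !lt_min !subr_gt0 gc1 gc2 divr_gt0.
have η1 : η <= G - g c1 by rewrite /η ge_min lexx.
have η2 : η <= G - g c2 by rewrite /η !ge_min lexx orbT.
have η3 : η <= G / 2 by rewrite /η !ge_min lexx !orbT.
have far : forall x, 0 <= x -> δ <= `|xc - x| -> g x <= G - η.
  move=> x x0 hx.
  have [xle|xgt] := leP x xc.
  - move: hx; rewrite ger0_norm ?subr_ge0 // => hx.
    have h1 : 0 <= x <= xc - δ by apply/andP; split => //; clear -hx; lra.
    have h2 := c1max x h1; clear -h2 η1; lra.
  - move: hx; rewrite ler0_norm; last by rewrite subr_le0 ltW.
    move=> hx.
    have [xX|Xx] := leP x X.
      have h1 : xc + δ <= x <= X by apply/andP; split => //; clear -hx; lra.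
      have h2 := c2max x h1; clear -h2 η2; lra.
    have h0 : X0 < x by clear -X0X Xx; lra.
    have h1 := HX0 x h0; have h2 := glt x x0; clear -h1 h2 η3; lra.
pose s2 := η / (2 * (K + 1)).
have s20 : 0 < s2 by rewrite /s2 divr_gt0 // mulr_gt0.
have Ks2 : K * s2 <= η / 2.
  have -> : η / 2 = (K + 1) * s2 by rewrite /s2; field; rewrite gt_eqF.
  by apply: ler_wpM2r; [exact: ltW | rewrite lerDl].
have gnear2 : forall x, xc <= x <= xc + s2 -> G - η / 2 <= g x.
  move=> x /andP[h1 h2].
  have := HK xc x (inD _ (ltW hxc)) (inD _ (le_trans (ltW hxc) h1)).
  move/(le_trans (ler_norm _)) => h3.
  have h4 : `|xc - x| <= s2 by rewrite distrC ger0_norm ?subr_ge0 //; clear -h2; lra.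
  have h5 : K * `|xc - x| <= K * s2 by rewrite ler_wpM2l.
  move: Ks2; rewrite /G => Ks2; clear -h3 h5 Ks2; lra.
have xcs2 : xc < xc + s2 by rewrite ltrDl.
pose C2 := Rintegral (@lebesgue_measure R) `[xc, xc + s2] n0.
have C20 : 0 < C2 := intpos _ _ (ltW hxc) xcs2.
have lowb2 : forall t, 0 <= t -> expR ((G - η / 2) * t) * C2 <= total_mass n t.
  by move=> t t0; apply: lowb => //; exact: ltW.
pose N0 := Rintegral (@lebesgue_measure R) D n0.
have N00 : 0 <= N0 by apply: Rintegral_ge0 => x /Din/n0_pos/ltW.
pose Q := 2 * M * N0.
have Q0 : 0 <= Q by rewrite /Q !mulr_ge0.
near=> t.
have tT : 4 * (Q + 1) / (e * C2 * η) <= t.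
  by near: t; apply: nbhs_pinfty_ge; rewrite num_real.
have eCη : 0 < e * C2 * η by rewrite !mulr_gt0.
have t0 : 0 <= t.
  apply: le_trans tT; apply: divr_ge0; last exact: ltW.
  by rewrite mulr_ge0 // addr_ge0.
pose rho := Rintegral (@lebesgue_measure R) D (f t).
pose I := Rintegral (@lebesgue_measure R) D (fun x => phi x * f t x).
have rhoe : total_mass n t = rho := rhoE t t0.
have Ie : Rintegral (@lebesgue_measure R) `[0, +oo[ (fun x => phi x * n x t) = I.
  by apply: eq_Rintegral => x; rewrite inE => Dx; rewrite sol // Din.
rewrite Ie rhoe.
have rho0' : 0 < rho by rewrite -rhoe; exact: rho0.
pose E := expR ((G - η) * t).
have E0 : 0 < E := expR_gt0 _.
pose h x := phi xc * f t x - phi x * f t x.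
pose B x := e / 2 * f t x + 2 * M * E * n0 x.
have mft := mf t.
have iphif : (@lebesgue_measure R).-integrable D (EFin \o (fun x => phi x * f t x)).
  apply: (int_dom (B := M * expR (G * t)) mD _ n0_int).
    exact: measurable_realfun.measurable_funM.
  move=> x Dx; rewrite normrM (ger0_norm (ltW (fpos t x (Din x Dx)))) -mulrA.
  apply: ler_pM.
  - exact: normr_ge0.
  - exact/ltW/fpos/Din.
  - exact: HM (Din _ Dx).
  - exact: fle (Din _ Dx).
have ic : (@lebesgue_measure R).-integrable D (EFin \o (fun x => phi xc * f t x)).
  exact: (intZ (phi xc) mD (intf t t0)).
have mh : measurable_fun D h.
  apply: measurable_realfun.measurable_funB.
    by apply: measurable_realfun.measurable_funM => //; exact: measurable_cst.
  exact: measurable_realfun.measurable_funM.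
have hb : forall x, D x -> `|h x| <= ((`|phi xc| + M) * expR (G * t)) * n0 x.
  move=> x Dx; have x0 := Din _ Dx.
  rewrite /h -mulrBl normrM (ger0_norm (ltW (fpos t x x0))) -mulrA.
  apply: ler_pM.
  - exact: normr_ge0.
  - exact/ltW/fpos.
  - have h1 := ler_normB (phi xc) (phi x); have h2 := HM x x0.
    clear -h1 h2; lra.
  - exact: fle.
have ih : (@lebesgue_measure R).-integrable D (EFin \o h) := int_dom mD mh n0_int hb.
have iah : (@lebesgue_measure R).-integrable D (EFin \o (fun x => `|h x|)).
  apply: (int_dom mD _ n0_int (B := (`|phi xc| + M) * expR (G * t))).
    exact: measurableT_comp (@measurable_realfun.normr_measurable R _) mh.
  by move=> x Dx; rewrite normr_id; exact: hb.
have iB : (@lebesgue_measure R).-integrable D (EFin \o B).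
  exact: (intD mD (intZ (e / 2) mD (intf t t0)) (intZ (2 * M * E) mD n0_int)).
have Jeq : Rintegral (@lebesgue_measure R) D h = phi xc * rho - I.
  rewrite /h RintegralB // RintegralZl //; exact: intf.
have Bint : Rintegral (@lebesgue_measure R) D B = e / 2 * rho + 2 * M * E * N0.
  rewrite /B RintegralD //; first rewrite !RintegralZl //.
  - exact: intf.
  - exact: (intZ (e / 2) mD (intf t t0)).
  - exact: (intZ (2 * M * E) mD n0_int).
have hle : Rintegral (@lebesgue_measure R) D (fun x => `|h x|) <= Rintegral (@lebesgue_measure R) D B.
  apply: le_Rintegral => // x Dx; have x0 := Din _ Dx.
  rewrite /h -mulrBl normrM (ger0_norm (ltW (fpos t x x0))) /B.
  have fp := fpos t x x0.
  have n0p := n0_pos x x0.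
  have nE : 0 <= 2 * M * E * n0 x by rewrite !mulr_ge0 // ltW.
  have [xnear|xfar] := ltP (`|xc - x|) δ.
  - have hp : `|phi xc - phi x| < e / 2.
      by apply: Hδ1; rewrite /ball /=; exact: lt_le_trans xnear δδ1.
    have h1 : `|phi xc - phi x| * f t x <= e / 2 * f t x by rewrite ler_wpM2r ?ltW.
    clear -h1 nE; lra.
  - have hp : `|phi xc - phi x| <= 2 * M.
      have h1 := ler_normB (phi xc) (phi x); have h2 := HM xc (ltW hxc).
      have h3 := HM x x0; clear -h1 h2 h3; lra.
    have fE : f t x <= E * n0 x.
      rewrite /f /E mulrC; apply: ler_wpM2r; first exact: ltW.
      by rewrite ler_expR ler_wpM2r // far.
    have h1 : `|phi xc - phi x| * f t x <= (2 * M) * (E * n0 x).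
      by apply: ler_pM => //; exact: ltW.
    have h2 : 0 <= e / 2 * f t x by rewrite mulr_ge0 // ltW.
    clear -h1 h2; lra.
have habs : `|phi xc * rho - I| <= e / 2 * rho + 2 * M * E * N0.
  rewrite -Jeq -Bint; apply: le_trans hle; exact: le_normr_Rintegral.
have Y : 1 + η / 2 * t <= expR (η / 2 * t) := expR_ge1Dx _.
have low : C2 * E * (1 + η / 2 * t) <= rho.
  have h1 := lowb2 t t0; rewrite -rhoe.
  have e1 : expR ((G - η / 2) * t) = E * expR (η / 2 * t).
    rewrite /E -expRD; congr expR; rewrite !mulrBl; lra.
  rewrite e1 in h1.
  apply: le_trans h1; rewrite [X in _ <= X]mulrC mulrA; apply: ler_wpM2l.
    exact: mulr_ge0 (ltW C20) (ltW E0).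
  exact: Y.
have tT' : 4 * (Q + 1) <= t * (e * C2 * η) by rewrite -ler_pdivrMr.
have k1 : e / 2 * (C2 * E * (1 + η / 2 * t)) <= e / 2 * rho.
  by rewrite ler_wpM2l // ltW.
have k2 : E * (4 * (Q + 1)) <= E * (t * (e * C2 * η)).
  by rewrite ler_wpM2l // ltW.
have hq : 2 * M * E * N0 = Q * E by rewrite /Q; ring.
have -> : phi xc - I / rho = (phi xc * rho - I) / rho.
  by field; rewrite gt_eqF.
rewrite normrM normfV (gtr0_norm rho0') ltr_pdivrMr //.
have CE : 0 <= C2 * E by rewrite mulr_ge0 // ltW.
clear -habs k1 k2 hq E0 e0 CE Q0.
nra.
Unshelve. all: by end_near.
Qed.
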